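(* Let $f:\subseteq X\rightrightarrows Y$ be a diverse problem, i.e. for every $x\in\mathrm{dom}(f)$ there is $y\in\mathrm{dom}(f)$ with $f(x)\cap f(y)=\emptyset$. Then $f$ is strongly co-complete: for every problem $g$, $f\le_{sW}\overline g\iff f\le_{sW}g$. If moreover the representation $\delta_Y$ is total, then $f$ is strongly co-total: for every problem $g$, $f\le_{sW}\mathsf{T}g\iff f\le_{sW}g$.
   Context: Represented space $(X,\delta_X)$: set with surjective partial $\delta_X:\subseteq\mathbb{N}^\mathbb{N}\to X$. A problem $f:\subseteq X\rightrightarrows Y$ is a partial multi-valued map with nonempty values on its domain; $F\vdash f$ means $\delta_YF(p)\in f(\delta_X(p))$ whenever $\delta_X(p)\in\mathrm{dom}(f)$. $f\le_{sW}g$ iff there are computable partial $H,K:\subseteq\mathbb{N}^\mathbb{N}\to\mathbb{N}^\mathbb{N}$ with $HGK\vdash f$ for all $G\vdash g$. For $p\in\mathbb{N}^\mathbb{N}$, $p-1$ is the concatenation of $p(0)-1,p(1)-1,\dots$ with $0-1$ the empty word. The completion of $(X,\delta_X)$ is $\overline X=X\cup\{\bot\}$ with $\delta_{\overline X}(p)=\delta_X(p-1)$ if $p-1$ is an infinite sequence in $\mathrm{dom}(\delta_X)$, $\delta_{\overline X}(p)=\bot$ otherwise. For $g:\subseteq U\rightrightarrows V$, the completion $\overline g:\overline U\rightrightarrows\overline V$ is $\overline g(u)=g(u)$ for $u\in\mathrm{dom}(g)$ and $\overline V$ otherwise; the totalization $\mathsf{T}g:U\rightrightarrows V$ is $\mathsf{T}g(u)=g(u)$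 for $u\in\mathrm{dom}(g)$ and $V$ otherwise. *)

(* Defs.v *)
From Stdlib Require Import Arith List.
Import ListNotations.

Definition Baire := nat -> nat.

Inductive prcode : Type :=
| PZero : prcode
| PSucc : prcode
| PProj : nat -> prcode
| PComp : prcode -> list prcode -> prcode
| PPrec : prcode -> prcode -> prcode
| PMu : prcode -> prcode.

Inductive peval : prcode -> list nat -> nat -> Prop :=
| ev_zero : forall v, peval PZero v 0
| ev_succ : forall x v, peval PSucc (x :: v) (S x)
| ev_proj : forall i v, i < length v -> peval (PProj i) v (nth i v 0)
| ev_comp : forall f gs v ws y,
    pevals gs v ws -> peval f ws y -> peval (PComp f gs) v y
| ev_prec0 : forall b s v y, peval b v y -> peval (PPrec b s) (0 :: v) y
| ev_precS : forall b s n v y z,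
    peval (PPrec b s) (n :: v) y -> peval s (n :: y :: v) z ->
    peval (PPrec b s) (S n :: v) z
| ev_mu : forall f v n,
    peval f (n :: v) 0 ->
    (forall m, m < n -> exists k, peval f (m :: v) (S k)) ->
    peval (PMu f) v n
with pevals : list prcode -> list nat -> list nat -> Prop :=
| evs_nil : forall v, pevals [] v []
| evs_cons : forall g gs v w ws,
    peval g v w -> pevals gs v ws -> pevals (g :: gs) v (w :: ws).

(* Coding of finite words over nat by naturals (Cantor pairing). *)
Definition cpair (a b : nat) : nat := (a + b) * (a + b + 1) / 2 + b.
Fixpoint enc_word (w : list nat) : nat :=
  match w with [] => 0 | x :: l => S (cpair x (enc_word l)) end.
Definition prefix (p : Baire) (m : nat) : list nat := map p (seq 0 m).

Record pfun : Type := mkPfun { pdom : Baire -> Prop; papp : Baire -> Baire }.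

(* Type-2 computability: output symbol n of H(p) is announced (as S k) by a
   partial recursive function reading n and a finite prefix of p, and all
   announcements are correct. *)
Definition computable (H : pfun) : Prop :=
  exists c : prcode, forall p, pdom H p -> forall n,
    (exists m, peval c [n; enc_word (prefix p m)] (S (papp H p n))) /\
    (forall m k, peval c [n; enc_word (prefix p m)] (S k) -> k = papp H p n).

Definition compose3 (H G K : pfun) : pfun :=
  mkPfun (fun p => pdom K p /\ pdom G (papp K p) /\ pdom H (papp G (papp K p)))
         (fun p => papp H (papp G (papp K p))).

Definition rep_functional {X : Type} (d : Baire -> X -> Prop) : Prop :=
  forall p x x', d p x -> d p x' -> x = x'.
Definition rep_surjective {X : Type} (d : Baire -> X -> Prop) : Prop :=
  forall x, exists p, d p x.
Definition is_rep {X : Type} (d : Baire -> X -> Prop) : Prop :=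
  rep_functional d /\ rep_surjective d.
Definition rep_total {X : Type} (d : Baire -> X -> Prop) : Prop :=
  forall p, exists x, d p x.

(* A problem f :⊆ X ⇉ Y is a relation; dom f = {x | f(x) nonempty}. *)
Definition pdomain {X Y : Type} (f : X -> Y -> Prop) (x : X) : Prop :=
  exists y, f x y.

Definition realizes {X Y : Type} (dX : Baire -> X -> Prop) (dY : Baire -> Y -> Prop)
  (F : pfun) (f : X -> Y -> Prop) : Prop :=
  forall p x, dX p x -> pdomain f x ->
    pdom F p /\ exists y, dY (papp F p) y /\ f x y.

Definition sW_le {X Y U V : Type}
  (dX : Baire -> X -> Prop) (dY : Baire -> Y -> Prop) (f : X -> Y -> Prop)
  (dU : Baire -> U -> Prop) (dV : Baire -> V -> Prop) (g : U -> V -> Prop) : Prop :=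
  exists H K : pfun, computable H /\ computable K /\
    forall G : pfun, realizes dU dV G g -> realizes dX dY (compose3 H G K) f.

Fixpoint nz_count (p : Baire) (n : nat) : nat :=
  match n with
  | 0 => 0
  | S n' => nz_count p n' + (if Nat.eqb (p n') 0 then 0 else 1)
  end.

(* minus1 p q : p-1 is an infinite sequence and equals q. *)
Definition minus1 (p q : Baire) : Prop :=
  forall k, exists n, p n = S (q k) /\ nz_count p n = k.

Definition bar_delta {X : Type} (d : Baire -> X -> Prop) (p : Baire) (x : option X) : Prop :=
  match x with
  | Some x' => exists q, minus1 p q /\ d q x'
  | None => ~ (exists q x', minus1 p q /\ d q x')
  end.

Definition completion {U V : Type} (g : U -> V -> Prop) (u : option U) (v : option V) : Prop :=
  match u with
  | Some u' => (pdomain g u' -> exists v', v = Some v' /\ g u' v')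
  | None => True
  end.

Definition totalization {U V : Type} (g : U -> V -> Prop) (u : U) (v : V) : Prop :=
  (pdomain g u -> g u v).

Definition diverse {X Y : Type} (f : X -> Y -> Prop) : Prop :=
  forall x, pdomain f x -> exists y, pdomain f y /\ forall z, ~ (f x z /\ f y z).

(* Main.v *)
Require Import Defs.
From Stdlib Require Import Arith List Lia Classical ClassicalEpsilon FunctionalExtensionality.
Import ListNotations.

Definition prcode_ind' (P : prcode -> Prop)
 (HZ : P PZero) (HS : P PSucc) (HP : forall i, P (PProj i))
 (HC : forall f gs, P f -> Forall P gs -> P (PComp f gs))
 (HR : forall b t, P b -> P t -> P (PPrec b t))
 (HM : forall f, P f -> P (PMu f)) : forall c, P c :=
 fix F c := match c with
 | PZero => HZ | PSucc => HS | PProj i => HP i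
 | PComp f gs => HC f gs (F f) ((fix G gs := match gs return Forall P gs with [] => Forall_nil _ | g :: gs' => @Forall_cons _ P g gs' (F g) (G gs') end) gs)
 | PPrec b t => HR b t (F b) (F t)
 | PMu f => HM f (F f) end.

Lemma pevals_det gs : Forall (fun g => forall v y, peval g v y -> forall y', peval g v y' -> y = y') gs ->
  forall v ws, pevals gs v ws -> forall ws', pevals gs v ws' -> ws = ws'.
Proof.
  induction 1; intros v ws H1 ws' H2; inversion H1; inversion H2; subst; auto.
  f_equal; eauto.
Qed.

Lemma peval_det : forall c v y, peval c v y -> forall y', peval c v y' -> y = y'.
Proof.
  induction c as [| | i | f gs IHf IHgs | b t IHb IHt | f IHf] using prcode_ind'; intros v y H y' H'.
  - inversion H; inversion H'; auto.
  - inversion H; inversion H'; subst; congruence.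
  - inversion H; inversion H'; subst; auto.
  - inversion H; inversion H'; subst.
    assert (ws = ws0) by (eapply pevals_det; eauto). subst. eauto.
  - revert y y' H H'. destruct v as [|n v]. { intros; inversion H. }
    revert v. induction n; intros v y y' H H'.
    + inversion H; inversion H'; subst; eauto.
    + inversion H; inversion H'; subst.
      assert (y0 = y1) by eauto. subst. eauto.
  - inversion H; inversion H'; subst.
    destruct (lt_eq_lt_dec y y') as [[Hl|]|Hl]; auto.
    + destruct (H7 _ Hl) as [k Hk]. specialize (IHf _ _ H1 _ Hk). discriminate.
    + destruct (H2 _ Hl) as [k Hk]. specialize (IHf _ _ H6 _ Hk). discriminate.
Qed.

Fixpoint allsome (l : list (option nat)) : option (list nat) :=
  match l with [] => Some [] | o :: l' =>
    match o, allsome l' with Some w, Some ws => Some (w :: ws) | _, _ => None end end.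

Fixpoint mugo (F : nat -> option nat) (m fuel : nat) : option nat :=
  match fuel with 0 => None | S fuel' =>
    match F m with Some 0 => Some m | Some (S _) => mugo F (S m) fuel' | None => None end end.

Fixpoint precb (B : option nat) (T : nat -> nat -> option nat) (n : nat) : option nat :=
  match n with 0 => B | S n' => match precb B T n' with Some y => T n' y | None => None end end.

Fixpoint evalb (s : nat) (c : prcode) (v : list nat) {struct c} : option nat :=
  match c with
  | PZero => Some 0
  | PSucc => match v with x :: _ => Some (S x) | [] => None end
  | PProj i => if i <? length v then Some (nth i v 0) else None
  | PComp f gs =>
      match allsome (map (fun g => evalb s g v) gs) with Some ws => evalb s f ws | None => None end
  | PPrec b t =>
      match v with
      | [] => None
      | n :: v' => precb (evalb s b v') (fun n' y => evalb s t (n' :: y :: v')) n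
      end
  | PMu f => mugo (fun m => evalb s f (m :: v)) 0 (S s)
  end.


Lemma allsome_map_sound (gs : list prcode) (G : prcode -> option nat) v :
  Forall (fun g => forall y, G g = Some y -> peval g v y) gs ->
  forall ws, allsome (map G gs) = Some ws -> pevals gs v ws.
Proof.
  induction 1; simpl; intros ws E.
  - inversion E; constructor.
  - destruct (G x) eqn:Ex; [|discriminate].
    destruct (allsome (map G l)) eqn:El; [|discriminate].
    inversion E; subst. constructor; auto.
Qed.

Lemma mugo_sound F fuel : forall m n, mugo F m fuel = Some n ->
  F n = Some 0 /\ m <= n /\ forall k, m <= k < n -> exists j, F k = Some (S j).
Proof.
  induction fuel; simpl; intros m n E; [discriminate|].
  destruct (F m) as [[|j]|] eqn:Fm; try discriminate.
  - inversion E; subst. repeat split; auto. intros; lia.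
  - destruct (IHfuel _ _ E) as (A & B & C). repeat split; auto; try lia.
    intros k Hk. destruct (Nat.eq_dec k m). subst; eauto. apply C; lia.
Qed.

Lemma evalb_sound : forall c s v y, evalb s c v = Some y -> peval c v y.
Proof.
  induction c as [| | i | f gs IHf IHgs | b t IHb IHt | f IHf] using prcode_ind'; intros s v y E; cbn [evalb] in E.
  - inversion E; constructor.
  - destruct v; inversion E; constructor.
  - destruct (i <? length v) eqn:L; inversion E. apply Nat.ltb_lt in L. constructor; auto.
  - destruct (allsome _) eqn:A; [|discriminate].
    econstructor; [|eauto].
    eapply allsome_map_sound; [|eauto].
    eapply Forall_impl; [|exact IHgs]. simpl; intros; eauto.
  - destruct v as [|n v]; [discriminate|].
    revert y E. induction n; simpl; intros y E.
    + constructor; eauto.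
    + destruct (precb _ _ n) eqn:P; [|discriminate].
      econstructor; eauto.
  - destruct (mugo_sound _ _ _ _ E) as (A & _ & C).
    constructor; eauto. intros m Hm. destruct (C m) as [j Hj]; [lia|]. eauto.
Qed.

Lemma mugo_mono (F F' : nat -> option nat) :
  (forall k z, F k = Some z -> F' k = Some z) ->
  forall fuel m y, mugo F m fuel = Some y -> forall fuel', fuel <= fuel' -> mugo F' m fuel' = Some y.
Proof.
  intros HF. induction fuel; simpl; intros m y E fuel' Hf; [discriminate|].
  destruct fuel' as [|fuel']; [lia|]. simpl.
  destruct (F m) as [[|j]|] eqn:Fm; try discriminate.
  - rewrite (HF _ _ Fm). auto.
  - rewrite (HF _ _ Fm). apply IHfuel; auto; lia.
Qed.

Lemma allsome_mono (gs : list prcode) (G G' : prcode -> option nat) :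
  Forall (fun g => forall y, G g = Some y -> G' g = Some y) gs ->
  forall ws, allsome (map G gs) = Some ws -> allsome (map G' gs) = Some ws.
Proof.
  induction 1; simpl; intros ws E; auto.
  destruct (G x) eqn:Ex; [|discriminate].
  destruct (allsome (map G l)) eqn:El; [|discriminate].
  rewrite (H _ eq_refl). rewrite (IHForall _ eq_refl). auto.
Qed.

Lemma evalb_mono1 : forall c s v y, evalb s c v = Some y -> evalb (S s) c v = Some y.
Proof.
  induction c as [| | i | f gs IHf IHgs | b t IHb IHt | f IHf] using prcode_ind'; intros s v y E; cbn [evalb] in *; auto.
  - destruct (allsome _) eqn:A; [|discriminate].
    erewrite allsome_mono; [eauto| |eauto].
    eapply Forall_impl; [|exact IHgs]. simpl; intros; eauto.
  - destruct v as [|n v]; [discriminate|].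
    revert y E. induction n; simpl; intros y E; eauto.
    destruct (precb _ _ n) eqn:P; [|discriminate]. rewrite (IHn _ eq_refl). eauto.
  - eapply mugo_mono; [| exact E | lia]. simpl. intros; eauto.
Qed.

Lemma evalb_mono : forall c s v y, evalb s c v = Some y -> forall s', s <= s' -> evalb s' c v = Some y.
Proof. intros c s v y E s' H. induction H; auto. apply evalb_mono1; auto. Qed.

Lemma mugo_complete (F : nat -> option nat) n :
  F n = Some 0 -> forall fuel m, m <= n -> n - m < fuel ->
  (forall k, m <= k < n -> exists j, F k = Some (S j)) -> mugo F m fuel = Some n.
Proof.
  intros Fn. induction fuel; intros m H1 H2 H3; [lia|]. simpl.
  destruct (Nat.eq_dec m n). subst; rewrite Fn; auto.
  destruct (H3 m) as [j Hj]; [lia|]. rewrite Hj. apply IHfuel; try lia.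
  intros; apply H3; lia.
Qed.

Lemma evalb_complete : forall c v y, peval c v y -> exists s, evalb s c v = Some y.
Proof.
  induction c as [| | i | f gs IHf IHgs | b t IHb IHt | f IHf] using prcode_ind'; intros v y H.
  - inversion H; subst; exists 0; reflexivity.
  - inversion H; subst; exists 0; reflexivity.
  - inversion H; subst; exists 0; simpl. apply Nat.ltb_lt in H1. rewrite H1. auto.
  - inversion H; subst.
    assert (exists s, allsome (map (fun g => evalb s g v) gs) = Some ws) as [s1 Hs1].
    { clear H H5 IHf. revert IHgs. induction H2 as [|g gs0 v0 w ws0 Hg Hgs IH]; intros IHgs.
      - exists 0; auto.
      - inversion IHgs as [|? ? Hg' Hrest]; subst. destruct (Hg' _ _ Hg) as [s1 E1].
        destruct (IH Hrest) as [s2 E2]. exists (s1 + s2). simpl.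
        rewrite (evalb_mono _ _ _ _ E1 (s1+s2)) by lia.
        erewrite (allsome_mono _ (fun g => evalb s2 g v0)); eauto.
        apply Forall_forall. intros; eapply evalb_mono; eauto; lia. }
    destruct (IHf _ _ H5) as [s2 Hs2]. exists (s1 + s2). simpl.
    erewrite (allsome_mono _ (fun g => evalb s1 g v)); eauto.
    + eapply evalb_mono; eauto; lia.
    + apply Forall_forall. intros; eapply evalb_mono; eauto; lia.
  - destruct v as [|n v]; [inversion H|].
    revert y H. induction n; intros y H.
    + inversion H; subst. destruct (IHb _ _ H4) as [s E]. exists s; simpl; auto.
    + inversion H; subst. destruct (IHn _ H5) as [s1 E1]. destruct (IHt _ _ H6) as [s2 E2].
      exists (s1 + s2). pose proof (evalb_mono _ _ _ _ E1 (s1+s2) ltac:(lia)) as E1'.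
      simpl in E1' |- *. rewrite E1'. eapply evalb_mono; eauto; lia.
  - inversion H; subst.
    destruct (IHf _ _ H1) as [s0 E0].
    assert (exists s, forall k, k < y -> exists j, evalb s f (k :: v) = Some (S j)) as [s1 Hs1].
    { clear H H1 E0. induction y.
      - exists 0; intros; lia.
      - destruct IHy as [s1 Hs1]. { intros; apply H2; lia. }
        destruct (H2 y) as [j Hj]; [lia|]. destruct (IHf _ _ Hj) as [s2 E2].
        exists (s1 + s2). intros k Hk. destruct (Nat.eq_dec k y).
        + subst. exists j. eapply evalb_mono; eauto; lia.
        + destruct (Hs1 k) as [j' Hj']; [lia|]. exists j'. eapply evalb_mono; eauto; lia. }
    exists (s0 + s1 + y). cbn [evalb]. apply mugo_complete; try lia.
    + eapply evalb_mono; eauto; lia.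
    + intros k Hk. destruct (Hs1 k) as [j Hj]; [lia|]. exists j. eapply evalb_mono; eauto; lia.
Qed.

Notation "v # i" := (nth i v 0) (at level 2, left associativity).

Definition PR (a : nat) (F : list nat -> nat) :=
  exists c, forall v, length v = a -> peval c v (F v).

Lemma PR_ext a F G : PR a F -> (forall v, length v = a -> F v = G v) -> PR a G.
Proof. intros [c Hc] E. exists c. intros v L. rewrite <- E; auto. Qed.

Lemma PR_const a k : PR a (fun _ => k).
Proof.
  induction k.
  - exists PZero. intros; constructor.
  - destruct IHk as [c Hc]. exists (PComp PSucc [c]). intros v L.
    econstructor. constructor. apply Hc; auto. constructor. constructor.
Qed.

Lemma PR_proj a i : i < a -> PR a (fun v => v#i).
Proof. intros H. exists (PProj i). intros v L. constructor. lia. Qed.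

Lemma PR_compl a b F (Fs : list (list nat -> nat)) :
  length Fs = b -> PR b F -> Forall (PR a) Fs -> PR a (fun v => F (map (fun G => G v) Fs)).
Proof.
  intros Lb [c Hc] HF.
  assert (exists cs, forall v, length v = a -> pevals cs v (map (fun G => G v) Fs)) as [cs Hcs].
  { clear Lb Hc. induction HF.
    - exists []. intros; constructor.
    - destruct H as [c1 H1]. destruct IHHF as [cs Hcs]. exists (c1 :: cs). intros; simpl; constructor; auto. }
  exists (PComp c cs). intros v L. econstructor; eauto. apply Hc. rewrite length_map; auto.
Qed.

Lemma PR_comp1 a F G1 : PR 1 F -> PR a G1 -> PR a (fun v => F [G1 v]).
Proof. intros. apply (PR_compl a 1 F [G1]); auto. Qed.
Lemma PR_comp2 a F G1 G2 : PR 2 F -> PR a G1 -> PR a G2 -> PR a (fun v => F [G1 v; G2 v]).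
Proof. intros. apply (PR_compl a 2 F [G1; G2]); auto. Qed.
Lemma PR_comp3 a F G1 G2 G3 : PR 3 F -> PR a G1 -> PR a G2 -> PR a G3 -> PR a (fun v => F [G1 v; G2 v; G3 v]).
Proof. intros. apply (PR_compl a 3 F [G1; G2; G3]); auto. Qed.
Lemma PR_comp4 a F G1 G2 G3 G4 : PR 4 F -> PR a G1 -> PR a G2 -> PR a G3 -> PR a G4 ->
  PR a (fun v => F [G1 v; G2 v; G3 v; G4 v]).
Proof. intros. apply (PR_compl a 4 F [G1; G2; G3; G4]); auto. Qed.

Lemma PR_S a F : PR a F -> PR a (fun v => S (F v)).
Proof.
  intros H. apply (PR_comp1 a (fun v => S (v#0)) F); auto.
  exists PSucc. intros v L. destruct v as [|x [|]]; simpl in L; try lia. constructor.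
Qed.

Fixpoint prim (G T : list nat -> nat) (n : nat) (v : list nat) : nat :=
  match n with 0 => G v | S n' => T (n' :: prim G T n' v :: v) end.

Lemma PR_rec a G T : PR a G -> PR (S (S a)) T -> PR (S a) (fun v => prim G T (v#0) (tl v)).
Proof.
  intros [b Hb] [t Ht]. exists (PPrec b t). intros v L.
  destruct v as [|n v]; simpl in L; [lia|]. simpl.
  induction n; simpl.
  - constructor. apply Hb; lia.
  - econstructor; eauto. apply Ht. simpl; lia.
Qed.

Lemma PR_pred : PR 1 (fun v => pred (v#0)).
Proof.
  eapply PR_ext. apply (PR_rec 0 (fun _ => 0) (fun v => v#0)). apply PR_const. apply PR_proj; lia.
  intros v L. destruct v as [|n [|]]; simpl in L; try lia. simpl. destruct n; reflexivity.
Qed.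

Lemma PR_add : PR 2 (fun v => v#0 + v#1).
Proof.
  eapply PR_ext. apply (PR_rec 1 (fun v => v#0) (fun v => S (v#1))). apply PR_proj; lia.
  apply PR_S, PR_proj; lia.
  intros v L. destruct v as [|n [|x [|]]]; simpl in L; try lia. simpl.
  induction n; simpl; auto.
Qed.

Lemma PR_subr : PR 2 (fun v => v#1 - v#0).
Proof.
  eapply PR_ext. apply (PR_rec 1 (fun v => v#0) (fun v => pred (v#1))). apply PR_proj; lia.
  apply (PR_comp1 3 (fun v => pred (v#0))). apply PR_pred. apply PR_proj; lia.
  intros v L. destruct v as [|n [|x [|]]]; simpl in L; try lia. simpl.
  induction n; simpl; [lia|]. rewrite IHn. lia.
Qed.

Lemma PR_ifz : PR 3 (fun v => match v#0 with 0 => v#1 | S _ => v#2 end).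
Proof.
  eapply PR_ext. apply (PR_rec 2 (fun v => v#0) (fun v => v#3)). apply PR_proj; lia. apply PR_proj; lia.
  intros v L. destruct v as [|n [|x [|y [|]]]]; simpl in L; try lia. simpl.
  destruct n; reflexivity.
Qed.

Lemma PRc_pred a F : PR a F -> PR a (fun v => pred (F v)).
Proof. intros; apply (PR_comp1 a (fun v => pred (v#0))); auto using PR_pred. Qed.
Lemma PRc_add a F G : PR a F -> PR a G -> PR a (fun v => F v + G v).
Proof. intros; apply (PR_comp2 a (fun v => v#0 + v#1)); auto using PR_add. Qed.
Lemma PRc_sub a F G : PR a F -> PR a G -> PR a (fun v => F v - G v).
Proof. intros; apply (PR_comp2 a (fun v => v#1 - v#0)); auto using PR_subr. Qed.
Lemma PRc_ifz a F G H : PR a F -> PR a G -> PR a H ->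
  PR a (fun v => match F v with 0 => G v | S _ => H v end).
Proof. intros; apply (PR_comp3 a (fun v => match v#0 with 0 => v#1 | S _ => v#2 end)); auto using PR_ifz. Qed.

Lemma map_nth_seq (v : list nat) k a : length v = k + a -> map (fun i => v#i) (seq k a) = skipn k v.
Proof.
  revert k. induction a; intros k L; simpl.
  - rewrite skipn_all2; auto; lia.
  - rewrite IHa by lia. clear IHa.
    revert v L. induction k; intros v L; destruct v; simpl in *; try lia; auto.
    all: apply IHk; lia.
Qed.

Lemma Forall_PR_proj a k n : k + n <= a -> Forall (PR a) (map (fun i v => v#i) (seq k n)).
Proof.
  intros H. apply Forall_forall. intros G HG. apply in_map_iff in HG. destruct HG as [i [<- Hi]].
  apply in_seq in Hi. apply PR_proj. lia.
Qed.

Lemma PR_subst0 a F G : PR (S a) F -> PR (S a) G -> PR (S a) (fun v => F (G v :: tl v)).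
Proof.
  intros HF HG. eapply PR_ext.
  apply (PR_compl (S a) (S a) F (G :: map (fun i v => v#i) (seq 1 a))).
  simpl; rewrite length_map, length_seq; auto. auto.
  constructor; auto. apply Forall_PR_proj; lia.
  intros v L. simpl. f_equal. f_equal. rewrite map_map. rewrite map_nth_seq. destruct v; auto. lia.
Qed.

Lemma PR_swap01 a F : PR (S (S a)) F -> PR (S (S a)) (fun v => F (v#1 :: v#0 :: skipn 2 v)).
Proof.
  intros HF. eapply PR_ext.
  apply (PR_compl (S (S a)) (S (S a)) F ((fun v => v#1) :: (fun v => v#0) :: map (fun i v => v#i) (seq 2 a))).
  simpl; rewrite length_map, length_seq; auto. auto.
  constructor. apply PR_proj; lia. constructor. apply PR_proj; lia. apply Forall_PR_proj; lia.
  intros v L. simpl. rewrite map_map. rewrite map_nth_seq. auto. lia.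
Qed.

Definition enc_opt (o : option nat) : nat := match o with None => 0 | Some y => S y end.

Fixpoint allnz (l : list nat) : nat :=
  match l with [] => 1 | r :: l' => match r with 0 => 0 | S _ => allnz l' end end.

Lemma allsome_some l ws : allsome l = Some ws ->
  allnz (map enc_opt l) = 1 /\ map (fun o => pred (enc_opt o)) l = ws.
Proof.
  revert ws; induction l as [|o l IH]; simpl; intros ws E.
  - inversion E; auto.
  - destruct o; [|discriminate]. destruct (allsome l) eqn:A; [|discriminate].
    inversion E; subst. destruct (IH _ eq_refl). simpl. rewrite H, H0. auto.
Qed.

Lemma allsome_none l : allsome l = None -> allnz (map enc_opt l) = 0.
Proof.
  induction l as [|o l IH]; simpl; intros E; [discriminate|].
  destruct o; simpl; auto. destruct (allsome l); [discriminate|]. auto.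
Qed.

Lemma PR_allnz a (Fs : list (list nat -> nat)) : Forall (PR a) Fs -> PR a (fun v => allnz (map (fun G => G v) Fs)).
Proof.
  induction 1; simpl.
  - apply PR_const.
  - apply (PRc_ifz a x (fun _ => 0) (fun v => allnz (map (fun G => G v) l))); auto using PR_const.
Qed.

Lemma Forall_PR_projs k n (v : list nat) : length v = k + n -> map (fun G => G v) (map (fun i (w : list nat) => w#i) (seq k n)) = skipn k v.
Proof. intros L. rewrite map_map. apply map_nth_seq; auto. Qed.

Definition eq1 x := match x with 0 => 0 | S y => match y with 0 => 1 | S _ => 0 end end.

Lemma PRc_eq1 a F : PR a F -> PR a (fun v => eq1 (F v)).
Proof.
  intros H. eapply PR_ext.
  apply (PRc_ifz a F (fun _ => 0) (fun v => match pred (F v) with 0 => 1 | S _ => 0 end)); auto using PR_const.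
  apply PRc_ifz; auto using PR_const, PRc_pred.
  intros v _. unfold eq1. destruct (F v) as [|[|]]; auto.
Qed.

Definition muT (Ff : list nat -> nat) (w : list nat) : nat :=
  match eq1 (w#1) with
  | 0 => w#1
  | S _ => match Ff (w#2 :: w#0 :: skipn 3 w) with
           | 0 => 0
           | S r' => match r' with 0 => S (S (w#0)) | S _ => 1 end end
  end.

Lemma mu_state (F : nat -> option nat) (Ff : list nat -> nat) s v' :
  (forall k, Ff (s :: k :: v') = enc_opt (F k)) ->
  let st := fun n => prim (fun _ => 1) (muT Ff) n (s :: v') in
  (forall k i, eq1 (st k) = 0 -> st (k + i) = st k) /\
  (forall j m, st m = 1 -> enc_opt (match st (m + j) with S (S r) => Some r | _ => None end) = enc_opt (mugo F m j)).
Proof.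
  intros HF st.
  assert (A : forall k i, eq1 (st k) = 0 -> st (k + i) = st k).
  { intros k i. induction i; intros E. rewrite Nat.add_0_r; auto.
    rewrite Nat.add_succ_r. unfold st at 1. simpl. fold (st (k+i)). unfold muT. simpl.
    rewrite IHi by auto. rewrite E. auto. }
  split; auto.
  intros j. induction j; intros m E.
  - rewrite Nat.add_0_r, E. auto.
  - simpl. rewrite Nat.add_succ_r, <- Nat.add_succ_l.
    assert (Sm : st (S m) = match F m with None => 0 | Some 0 => S (S m) | Some (S _) => 1 end).
    { unfold st at 1; simpl. fold (st m). unfold muT. simpl. rewrite E. simpl. rewrite HF.
      destruct (F m) as [[|]|]; auto. }
    destruct (F m) as [[|]|] eqn:Fm.
    + rewrite A; rewrite Sm; auto.
    + apply IHj. auto.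
    + rewrite A; rewrite Sm; auto.
Qed.

Lemma evalb_PR : forall c a, PR (S a) (fun v => enc_opt (evalb (v#0) c (tl v))).
Proof.
  induction c as [| | i | f gs IHf IHgs | b t IHb IHt | f IHf] using prcode_ind'; intros a.
  - eapply PR_ext. apply (PR_const _ 1). intros v _. auto.
  - destruct a as [|a].
    + eapply PR_ext. apply (PR_const _ 0). intros v L. destruct v as [|s [|]]; simpl in *; auto; lia.
    + eapply PR_ext. apply PR_S, PR_S, (PR_proj _ 1); lia. intros v L. destruct v as [|s [|x v]]; simpl in *; auto; lia.
  - destruct (Nat.ltb i a) eqn:Ei.
    + apply Nat.ltb_lt in Ei. eapply PR_ext. apply PR_S, (PR_proj _ (S i)); lia.
      intros v L. destruct v as [|s v]; simpl in *; [lia|]. cbn [evalb]. replace (i <? length v) with true; auto.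
      symmetry. apply Nat.ltb_lt. lia.
    + eapply PR_ext. apply (PR_const _ 0). intros v L. destruct v as [|s v]; simpl in *; [lia|].
      cbn [evalb]. replace (i <? length v) with false; auto. congruence.
  - set (Fg := fun g (v : list nat) => enc_opt (evalb (v#0) g (tl v))).
    assert (H1 : PR (S a) (fun v => allnz (map (fun G => G v) (map Fg gs)))).
    { apply PR_allnz. apply Forall_map. eapply Forall_impl; [|exact IHgs]. intros g Hg; apply Hg. }
    assert (H2 : PR (S a) (fun v => (fun w => enc_opt (evalb (w#0) f (tl w)))
                   (map (fun G => G v) ((fun v => v#0) :: map (fun g v => pred (Fg g v)) gs)))).
    { apply (PR_compl (S a) (S (length gs)) (fun w => enc_opt (evalb (w#0) f (tl w)))). simpl; rewrite length_map; auto. apply IHf.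
      constructor. apply PR_proj; lia. apply Forall_map. eapply Forall_impl; [|exact IHgs].
      intros g Hg. apply PRc_pred. apply Hg. }
    eapply PR_ext. apply (PRc_ifz _ _ (fun _ => 0) _ H1 (PR_const _ 0) H2).
    intros v L. destruct v as [|s v]; simpl in L; [lia|]. cbn [evalb nth tl map].
    rewrite !map_map. unfold Fg; simpl.
    destruct (allsome (map (fun g => evalb s g v) gs)) eqn:A.
    + destruct (allsome_some _ _ A) as [B C]. rewrite map_map in B, C. rewrite B. rewrite C. auto.
    + pose proof (allsome_none _ A) as B. rewrite map_map in B. rewrite B. auto.
  - destruct a as [|a].
    + eapply PR_ext. apply (PR_const _ 0). intros v L. destruct v as [|s [|]]; simpl in *; auto; lia.
    + set (Ft := fun u : list nat => enc_opt (evalb (u#0) t (tl u))).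
      set (G := fun u : list nat => enc_opt (evalb (u#0) b (tl u))).
      set (T := fun w : list nat => match w#1 with 0 => 0 | S _ =>
                  Ft (map (fun G => G w) ((fun w => w#2) :: (fun w => w#0) :: (fun w => pred (w#1)) :: map (fun i w => w#i) (seq 3 a))) end).
      assert (HT : PR (S (S (S a))) T).
      { apply PRc_ifz. apply PR_proj; lia. apply PR_const.
        apply (PR_compl _ (S (S (S a))) Ft). simpl; rewrite length_map, length_seq; auto. apply IHt.
        repeat constructor; try (apply PR_proj; lia). apply PRc_pred, PR_proj; lia. apply Forall_PR_proj; lia. }
      pose proof (PR_swap01 _ _ (PR_rec (S a) G T (IHb a) HT)) as HP.
      eapply PR_ext. apply HP. intros v L. destruct v as [|s [|n v]]; simpl in L; try lia.
      cbn [nth tl skipn]. cbn [evalb].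
      induction n; simpl; auto.
      rewrite IHn. unfold T at 1. simpl.
      destruct (precb _ _ n); simpl; auto.
      unfold Ft; simpl. rewrite map_map. rewrite map_nth_seq by (simpl; lia). simpl. auto.
  - set (Ff := fun u : list nat => enc_opt (evalb (u#0) f (tl u))).
    assert (HF : PR (S (S (S a))) (fun w => Ff (w#2 :: w#0 :: skipn 3 w))).
    { eapply PR_ext.
      apply (PR_compl _ (S (S a)) Ff ((fun w => w#2) :: (fun w => w#0) :: map (fun i w => w#i) (seq 3 a))).
      simpl; rewrite length_map, length_seq; auto. apply IHf.
      repeat constructor; try (apply PR_proj; lia). apply Forall_PR_proj; lia.
      intros w L. simpl. rewrite Forall_PR_projs by (simpl; lia). auto. }
    assert (HT : PR (S (S (S a))) (muT Ff)).
    { unfold muT. apply PRc_ifz. apply PRc_eq1, PR_proj; lia. apply PR_proj; lia.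
      eapply PR_ext. apply (PRc_ifz _ _ (fun _ => 0) (fun w => match pred (Ff (w#2 :: w#0 :: skipn 3 w)) with 0 => S (S (w#0)) | S _ => 1 end) HF (PR_const _ 0)).
      apply PRc_ifz. apply PRc_pred. auto.
      apply PR_S, PR_S, (PR_proj _ 0); lia. apply PR_const.
      intros w L. cbv beta. destruct (Ff (w#2 :: w#0 :: skipn 3 w)) as [|[|]]; reflexivity. }
    pose proof (PR_rec (S a) (fun _ => 1) (muT Ff) (PR_const _ 1) HT) as HR.
    assert (HR2 : PR (S a) (fun v => prim (fun _ => 1) (muT Ff) (S (v#0)) v)).
    { eapply PR_ext. apply (PR_compl (S a) (S (S a)) (fun v => prim (fun _ : list nat => 1) (muT Ff) v # 0 (tl v)) ((fun v => S (v#0)) :: map (fun i w => w#i) (seq 0 (S a)))).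
      simpl; rewrite length_map, length_seq; auto. apply HR.
      constructor. apply PR_S, PR_proj; lia. apply Forall_PR_proj; lia.
      intros v L. destruct v as [|x v]; [simpl in L; lia|]. cbn [map]. rewrite Forall_PR_projs by lia. reflexivity. }
    eapply PR_ext. apply (PRc_ifz _ _ (fun _ => 0) _ (PRc_pred _ _ HR2) (PR_const _ 0) (PRc_pred _ _ HR2)).
    intros v L. destruct v as [|s v]; simpl in L; [lia|]. cbn [nth tl].
    destruct (mu_state (fun k => evalb s f (k :: v)) Ff s v) as [_ B].
    { intros k. reflexivity. }
    specialize (B (S s) 0 eq_refl). change (0 + S s) with (S s) in B. cbn [evalb]. rewrite <- B.
    destruct (prim _ _ _ _) as [|[|r]]; simpl; auto.
Qed.

Definition PR1 (f : nat -> nat) := PR 1 (fun v => f (v#0)).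
Definition PR2 (f : nat -> nat -> nat) := PR 2 (fun v => f (v#0) (v#1)).
Definition PR3 (f : nat -> nat -> nat -> nat) := PR 3 (fun v => f (v#0) (v#1) (v#2)).

Lemma PRc1 a f F : PR1 f -> PR a F -> PR a (fun v => f (F v)).
Proof. intros. apply (PR_comp1 a (fun v => f (v#0))); auto. Qed.
Lemma PRc2 a f F G : PR2 f -> PR a F -> PR a G -> PR a (fun v => f (F v) (G v)).
Proof. intros. apply (PR_comp2 a (fun v => f (v#0) (v#1))); auto. Qed.
Lemma PRc3 a f F G H : PR3 f -> PR a F -> PR a G -> PR a H -> PR a (fun v => f (F v) (G v) (H v)).
Proof. intros. apply (PR_comp3 a (fun v => f (v#0) (v#1) (v#2))); auto. Qed.

Ltac prp := first [ apply PR_const | apply (PR_proj _ 0); lia | apply (PR_proj _ 1); lia | apply (PR_proj _ 2); lia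
                  | apply (PR_proj _ 3); lia | apply (PR_proj _ 4); lia ].

Lemma PR_rec1 (f : nat -> nat -> nat) (g : nat -> nat) (t : nat -> nat -> nat -> nat) :
  PR1 g -> PR3 t -> (forall x, f 0 x = g x) -> (forall k x, f (S k) x = t k (f k x) x) -> PR2 f.
Proof.
  intros Hg Ht E0 ES. eapply PR_ext. apply (PR_rec 1 (fun v => g (v#0)) (fun v => t (v#0) (v#1) (v#2))); auto.
  intros v L. destruct v as [|k [|x [|]]]; simpl in L; try lia. simpl.
  induction k; simpl. auto. rewrite ES, IHk. auto.
Qed.

Lemma PR_rec2 (f : nat -> nat -> nat -> nat) (g : nat -> nat -> nat) (t : nat -> nat -> nat -> nat -> nat) :
  PR2 g -> PR 4 (fun v => t (v#0) (v#1) (v#2) (v#3)) -> (forall x y, f 0 x y = g x y) ->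
  (forall k x y, f (S k) x y = t k (f k x y) x y) -> PR3 f.
Proof.
  intros Hg Ht E0 ES. eapply PR_ext. apply (PR_rec 2 (fun v => g (v#0) (v#1)) (fun v => t (v#0) (v#1) (v#2) (v#3))); auto.
  intros v L. destruct v as [|k [|x [|y [|]]]]; simpl in L; try lia. simpl.
  induction k; simpl. auto. rewrite ES, IHk. auto.
Qed.

Lemma PR1_pred : PR1 pred. Proof. exact PR_pred. Qed.
Lemma PR2_add : PR2 Nat.add. Proof. exact PR_add. Qed.
Lemma PR2_sub : PR2 Nat.sub.
Proof. unfold PR2. apply (PRc_sub 2 (fun v => v#0) (fun v => v#1)); prp. Qed.
Definition ifz (x y z : nat) := match x with 0 => y | S _ => z end.
Lemma PR3_ifz : PR3 ifz. Proof. exact PR_ifz. Qed.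

Lemma PRifz a F G H : PR a F -> PR a G -> PR a H -> PR a (fun v => ifz (F v) (G v) (H v)).
Proof. intros; apply PRc3; auto using PR3_ifz. Qed.
Lemma PRadd a F G : PR a F -> PR a G -> PR a (fun v => F v + G v).
Proof. intros; apply PRc2; auto using PR2_add. Qed.
Lemma PRsub a F G : PR a F -> PR a G -> PR a (fun v => F v - G v).
Proof. intros; apply PRc2; auto using PR2_sub. Qed.
Lemma PRpred a F : PR a F -> PR a (fun v => pred (F v)).
Proof. intros; apply PRc1; auto using PR1_pred. Qed.

Definition lebn x y := ifz (x - y) 1 0.
Lemma PR2_lebn : PR2 lebn.
Proof. unfold PR2, lebn. apply (PRifz 2 (fun v => v#0 - v#1) (fun _ => 1) (fun _ => 0)); [apply PRsub|..]; prp. Qed.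
Lemma lebn_spec x y : lebn x y = if x <=? y then 1 else 0.
Proof. unfold lebn, ifz. destruct (x <=? y) eqn:E; [apply Nat.leb_le in E|apply Nat.leb_gt in E];
  destruct (x - y) eqn:F; auto; lia. Qed.

Definition eqn x y := ifz (lebn x y) 0 (lebn y x).
Lemma PR2_eqn : PR2 eqn.
Proof. unfold PR2, eqn. apply (PRifz 2 (fun v => lebn (v#0) (v#1)) (fun _ => 0) (fun v => lebn (v#1) (v#0))).
  apply PRc2; auto using PR2_lebn; prp. prp. apply PRc2; auto using PR2_lebn; prp. Qed.
Lemma eqn_spec x y : eqn x y = if x =? y then 1 else 0.
Proof. unfold eqn. rewrite !lebn_spec. destruct (x =? y) eqn:E; [apply Nat.eqb_eq in E|apply Nat.eqb_neq in E].
  subst. rewrite Nat.leb_refl. auto.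
  destruct (x <=? y) eqn:A; destruct (y <=? x) eqn:B; simpl; auto.
  apply Nat.leb_le in A. apply Nat.leb_le in B. lia. Qed.

Fixpoint tri k := match k with 0 => 0 | S k' => tri k' + S k' end.
Lemma PR1_tri : PR1 tri.
Proof.
  eapply PR_ext. apply (PR_rec 0 (fun _ => 0) (fun v => v#1 + S (v#0))). prp.
  apply PRadd. prp. apply PR_S; prp.
  intros v L. destruct v as [|k [|]]; simpl in L; try lia. simpl. induction k; simpl; auto.
Qed.

Lemma tri_double k : 2 * tri k = k * (k + 1).
Proof. induction k; simpl tri; lia. Qed.

Lemma cpair_tri a b : cpair a b = tri (a + b) + b.
Proof.
  unfold cpair. f_equal. rewrite <- tri_double. rewrite Nat.mul_comm. apply Nat.div_mul. lia.
Qed.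

Lemma tri_mono a b : a <= b -> tri a <= tri b.
Proof. induction 1; simpl; lia. Qed.

Fixpoint diag z := match z with 0 => 0 | S z' =>
  ifz (lebn (tri (S (diag z'))) (S z')) (diag z') (S (diag z')) end.

Lemma PR1_diag : PR1 diag.
Proof.
  eapply PR_ext. apply (PR_rec 0 (fun _ => 0) (fun v => ifz (lebn (tri (S (v#1))) (S (v#0))) (v#1) (S (v#1)))). prp.
  apply PRifz. apply PRc2. apply PR2_lebn. apply PRc1. apply PR1_tri. apply PR_S; prp. apply PR_S; prp.
  prp. apply PR_S; prp.
  intros v L. destruct v as [|k [|]]; simpl in L; try lia. simpl. induction k; simpl; auto. rewrite IHk; auto.
Qed.

Lemma diag_spec z : tri (diag z) <= z < tri (S (diag z)).
Proof.
  induction z; simpl; [lia|].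
  rewrite lebn_spec. destruct (tri (diag z) + S (diag z) <=? S z) eqn:E; unfold ifz; simpl.
  - apply Nat.leb_le in E. simpl in *. lia.
  - apply Nat.leb_gt in E. simpl in *; lia.
Qed.

Lemma diag_unique z d : tri d <= z < tri (S d) -> diag z = d.
Proof.
  intros H. pose proof (diag_spec z).
  destruct (lt_eq_lt_dec (diag z) d) as [[L|]|L]; auto.
  - pose proof (tri_mono (S (diag z)) d L). lia.
  - pose proof (tri_mono (S d) (diag z) L). lia.
Qed.

Definition sndp z := z - tri (diag z).
Definition fstp z := diag z - sndp z.
Lemma PR1_sndp : PR1 sndp.
Proof. unfold PR1, sndp. apply PRsub. prp. apply PRc1. apply PR1_tri. apply PRc1. apply PR1_diag. prp. Qed.
Lemma PR1_fstp : PR1 fstp.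
Proof. unfold PR1, fstp. apply PRsub. apply PRc1. apply PR1_diag. prp. apply PRc1. apply PR1_sndp. prp. Qed.

Lemma diag_cpair a b : diag (cpair a b) = a + b.
Proof. apply diag_unique. rewrite cpair_tri. simpl. lia. Qed.
Lemma sndp_cpair a b : sndp (cpair a b) = b.
Proof. unfold sndp. rewrite diag_cpair, cpair_tri. lia. Qed.
Lemma fstp_cpair a b : fstp (cpair a b) = a.
Proof. unfold fstp. rewrite diag_cpair, sndp_cpair. lia. Qed.

Lemma PR2_cpair : PR2 cpair.
Proof.
  eapply PR_ext. apply (PRadd 2 (fun v => tri (v#0 + v#1)) (fun v => v#1)). apply PRc1. apply PR1_tri.
  apply (PRadd 2 (fun v => v#0) (fun v => v#1)); prp. prp.
  intros v _. rewrite cpair_tri. auto.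
Qed.

Definition hdw w := fstp (pred w).
Definition tlw w := sndp (pred w).
Definition consw x w := S (cpair x w).
Lemma PR1_hdw : PR1 hdw. Proof. unfold PR1, hdw. apply PRc1. apply PR1_fstp. apply PRpred. prp. Qed.
Lemma PR1_tlw : PR1 tlw. Proof. unfold PR1, tlw. apply PRc1. apply PR1_sndp. apply PRpred. prp. Qed.
Lemma PR2_consw : PR2 consw. Proof. unfold PR2, consw. apply PR_S. apply PRc2. apply PR2_cpair. prp. prp. Qed.

Lemma enc_cons x l : enc_word (x :: l) = consw x (enc_word l). Proof. reflexivity. Qed.
Lemma hdw_enc x l : hdw (enc_word (x :: l)) = x. Proof. apply fstp_cpair. Qed.
Lemma tlw_enc x l : tlw (enc_word (x :: l)) = enc_word l. Proof. apply sndp_cpair. Qed.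
Lemma tlw_0 : tlw 0 = 0. Proof. reflexivity. Qed.

Lemma enc_length l : length l <= enc_word l.
Proof. induction l; simpl; auto. rewrite cpair_tri. lia. Qed.

Definition itl (k w : nat) := Nat.iter k tlw w.
Lemma PR2_itl : PR2 itl.
Proof.
  apply (PR_rec1 itl (fun x => x) (fun k r x => tlw r)). unfold PR1; prp.
  unfold PR3. apply PRc1. apply PR1_tlw. prp. auto. auto.
Qed.

Lemma itl_enc k l : itl k (enc_word l) = enc_word (skipn k l).
Proof.
  revert l. induction k; intros l; auto.
  unfold itl in *. rewrite Nat.iter_succ_r. destruct l as [|x l].
  - replace (tlw (enc_word [])) with (enc_word []) by reflexivity. rewrite IHk. rewrite skipn_nil. auto.
  - rewrite tlw_enc. rewrite IHk. auto.
Qed.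

Fixpoint flacc (step : nat -> nat -> nat) (w k : nat) : nat :=
  match k with 0 => 0 | S k' =>
    ifz (itl k' w) (flacc step w k') (step (flacc step w k') (hdw (itl k' w))) end.
Definition FL step w := flacc step w w.

Lemma PR_FL step : PR2 step -> PR1 (FL step).
Proof.
  intros Hs.
  assert (PR2 (fun k w => flacc step w k)).
  { apply (PR_rec1 (fun k w => flacc step w k) (fun _ => 0)
      (fun k a w => ifz (itl k w) a (step a (hdw (itl k w))))). unfold PR1; prp.
    unfold PR3. apply PRifz. apply PRc2. apply PR2_itl. prp. prp. prp.
    apply PRc2. auto. prp. apply PRc1. apply PR1_hdw. apply PRc2. apply PR2_itl. prp. prp.
    auto. auto. }
  unfold PR1, FL. apply (PRc2 1 (fun k w => flacc step w k) (fun v => v#0) (fun v => v#0)); auto; prp.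
Qed.

Lemma flacc_spec step l k : k <= length l -> flacc step (enc_word l) k = fold_left step (firstn k l) 0.
Proof.
  induction k; intros H. reflexivity. cbn [flacc].
  rewrite IHk by lia. rewrite itl_enc.
  destruct (skipn k l) as [|x r] eqn:E.
  - apply (f_equal (@length nat)) in E. rewrite length_skipn in E. simpl in E. lia.
  - rewrite enc_cons. unfold consw, ifz. change (S (cpair x (enc_word r))) with (enc_word (x :: r)). rewrite hdw_enc.
    assert (F: firstn (S k) l = firstn k l ++ [x]).
    { rewrite <- (firstn_skipn k l) at 1. rewrite E, firstn_app, length_firstn, firstn_firstn.
      replace (S k - Nat.min k (length l)) with 1 by lia. replace (Nat.min (S k) k) with k by lia. reflexivity. }
    rewrite F, fold_left_app. reflexivity.
Qed.

Lemma flacc_after step l k : length l <= k -> flacc step (enc_word l) k = fold_left step l 0.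
Proof.
  induction 1.
  - rewrite flacc_spec; auto. rewrite firstn_all; auto.
  - simpl. rewrite IHle. rewrite itl_enc. rewrite skipn_all2 by lia. reflexivity.
Qed.

Lemma FL_spec step l : FL step (enc_word l) = fold_left step l 0.
Proof. apply flacc_after. apply enc_length. Qed.

Definition revw := FL (fun acc x => consw x acc).
Lemma PR1_revw : PR1 revw.
Proof. apply PR_FL. unfold PR2. apply PRc2. apply PR2_consw. prp. prp. Qed.

Lemma fold_cons_rev l a : fold_left (fun acc x => consw x acc) l (enc_word a) = enc_word (rev l ++ a).
Proof.
  revert a. induction l; intros a0; simpl; auto. rewrite <- enc_cons. rewrite IHl.
  rewrite <- app_assoc. auto.
Qed.

Lemma revw_spec l : revw (enc_word l) = enc_word (rev l).
Proof. unfold revw. rewrite FL_spec. pose proof (fold_cons_rev l []) as H. rewrite app_nil_r in H. exact H. Qed.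

Lemma fold_left_rev_right' (f : nat -> nat -> nat) l a :
  fold_left f (rev l) a = fold_right (fun x y => f y x) a l.
Proof.
  revert a. induction l; intros a0; simpl; auto. rewrite fold_left_app. simpl. rewrite IHl. auto.
Qed.

Definition T2 w := FL (fun acc x => consw (S x) acc) (revw w).
Lemma PR1_T2 : PR1 T2.
Proof.
  unfold PR1, T2. apply PRc1. apply PR_FL. unfold PR2. apply (PRc2 2 consw (fun v => S (v#1)) (fun v => v#0)).
  apply PR2_consw. apply PR_S; prp. prp. apply PRc1. apply PR1_revw. prp.
Qed.
Lemma T2_spec l : T2 (enc_word l) = enc_word (map S l).
Proof.
  unfold T2. rewrite revw_spec, FL_spec, fold_left_rev_right'.
  induction l; simpl; auto. rewrite IHl. reflexivity.
Qed.

Fixpoint m1l (l : list nat) : list nat :=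
  match l with [] => [] | x :: l' => match x with 0 => m1l l' | S y => y :: m1l l' end end.

Definition T1 w := FL (fun acc x => ifz x acc (consw (pred x) acc)) (revw w).
Lemma PR1_T1 : PR1 T1.
Proof.
  unfold PR1, T1. apply PRc1. apply PR_FL. unfold PR2.
  apply (PRifz 2 (fun v => v#1) (fun v => v#0) (fun v => consw (pred (v#1)) (v#0))). prp. prp.
  apply PRc2. apply PR2_consw. apply PRpred; prp. prp. apply PRc1. apply PR1_revw. prp.
Qed.
Lemma T1_spec l : T1 (enc_word l) = enc_word (m1l l).
Proof.
  unfold T1. rewrite revw_spec, FL_spec, fold_left_rev_right'.
  induction l as [|x l IH]; simpl; auto. rewrite IH. destruct x; reflexivity.
Qed.

Definition prew k w := revw (itl k (revw w)).
Lemma PR2_prew : PR2 prew.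
Proof.
  unfold PR2, prew. apply PRc1. apply PR1_revw. apply PRc2. apply PR2_itl. prp. apply PRc1. apply PR1_revw. prp.
Qed.
Lemma prew_spec k l : prew k (enc_word l) = enc_word (firstn (length l - k) l).
Proof.
  unfold prew. rewrite revw_spec, itl_enc, revw_spec. rewrite skipn_rev. rewrite rev_involutive. auto.
Qed.

Lemma length_prefix p m : length (prefix p m) = m.
Proof. unfold prefix. rewrite length_map, length_seq. auto. Qed.

Lemma firstn_prefix p m k : k <= m -> firstn k (prefix p m) = prefix p k.
Proof.
  intros H. unfold prefix. rewrite firstn_map. f_equal.
  replace m with (k + (m - k)) by lia. rewrite seq_app. rewrite firstn_app. rewrite length_seq.
  rewrite Nat.sub_diag. simpl. rewrite app_nil_r. apply firstn_all2. rewrite length_seq; auto.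
Qed.

Lemma prew_prefix p m k : prew k (enc_word (prefix p m)) = enc_word (prefix p (m - k)).
Proof. rewrite prew_spec, length_prefix, firstn_prefix; auto. lia. Qed.

Definition plus1 (p : Baire) : Baire := fun n => S (p n).
Lemma prefix_plus1 p m : prefix (plus1 p) m = map S (prefix p m).
Proof. unfold prefix. rewrite map_map. reflexivity. Qed.

Lemma nz_count_mono r a b : a <= b -> nz_count r a <= nz_count r b.
Proof. induction 1; simpl; lia. Qed.

Lemma nz_count_S r n : r n <> 0 -> nz_count r (S n) = S (nz_count r n).
Proof. intros H. simpl. destruct (r n =? 0) eqn:E. apply Nat.eqb_eq in E; lia. lia. Qed.

Lemma nz_pos_unique r n1 n2 : r n1 <> 0 -> r n2 <> 0 -> nz_count r n1 = nz_count r n2 -> n1 = n2.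
Proof.
  intros H1 H2 E. destruct (lt_eq_lt_dec n1 n2) as [[L|]|L]; auto.
  - pose proof (nz_count_mono r (S n1) n2 L). rewrite nz_count_S in H; auto. lia.
  - pose proof (nz_count_mono r (S n2) n1 L). rewrite nz_count_S in H; auto. lia.
Qed.

Lemma minus1_at r q j : minus1 r q -> r j <> 0 -> r j = S (q (nz_count r j)).
Proof.
  intros M H. destruct (M (nz_count r j)) as [n [A B]].
  assert (n = j) by (apply nz_pos_unique with r; auto; lia). subst; auto.
Qed.

Lemma minus1_unique r q1 q2 : minus1 r q1 -> minus1 r q2 -> forall k, q1 k = q2 k.
Proof.
  intros M1 M2 k. destruct (M1 k) as [n [A B]].
  pose proof (minus1_at r q2 n M2) as C. rewrite A in C. rewrite B in C. specialize (C ltac:(lia)). lia.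
Qed.

Lemma minus1_plus1 q : minus1 (plus1 q) q.
Proof.
  intros k. exists k. split; auto. unfold plus1.
  induction k; simpl; auto. rewrite IHk. simpl. lia.
Qed.

Lemma m1l_prefix r q M : minus1 r q -> m1l (prefix r M) = prefix q (nz_count r M).
Proof.
  intros Mq. induction M. reflexivity.
  unfold prefix in *. rewrite seq_S, map_app. cbn [nz_count map plus].
  assert (A : forall l x, m1l (l ++ [x]) = m1l l ++ m1l [x]).
  { induction l; intros; simpl; auto. destruct a; simpl; rewrite IHl; auto. }
  rewrite A, IHM. destruct (r M) eqn:E.
  - simpl. rewrite app_nil_r. rewrite Nat.add_0_r. auto.
  - simpl. rewrite Nat.add_1_r. rewrite seq_S, map_app. simpl.
    pose proof (minus1_at r q M Mq) as C. rewrite E in C. specialize (C ltac:(lia)). injection C as C. rewrite C. auto.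
Qed.

Lemma PR1_code f : PR1 f -> exists c, forall x, peval c [x] (f x) /\ forall y, peval c [x] y -> y = f x.
Proof.
  intros [c Hc]. exists c. intros x. split. apply (Hc [x]); auto.
  intros y Hy. eapply peval_det; [exact Hy|]. apply (Hc [x]); auto.
Qed.

Lemma inv_comp f gs v y : peval (PComp f gs) v y -> exists ws, pevals gs v ws /\ peval f ws y.
Proof. intros H; inversion H; subst; eauto. Qed.
Lemma inv_cons g gs v ws : pevals (g :: gs) v ws -> exists w ws', ws = w :: ws' /\ peval g v w /\ pevals gs v ws'.
Proof. intros H; inversion H; subst; eauto 6. Qed.
Lemma inv_nil v ws : pevals [] v ws -> ws = [].
Proof. intros H; inversion H; auto. Qed.
Lemma inv_proj i v y : peval (PProj i) v y -> y = nth i v 0.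
Proof. intros H; inversion H; auto. Qed.

Lemma computable_pre (H : pfun) (T : nat -> nat) (phi : Baire -> Baire) (D : Baire -> Prop) :
  computable H -> PR1 T ->
  (forall p, D p -> pdom H (phi p)) ->
  (forall p, D p -> forall m, exists m', T (enc_word (prefix p m')) = enc_word (prefix (phi p) m)) ->
  (forall p, D p -> forall m', exists m, T (enc_word (prefix p m')) = enc_word (prefix (phi p) m)) ->
  computable (mkPfun D (fun p => papp H (phi p))).
Proof.
  intros [c Hc] HT Hdom Hex Hsd. destruct (PR1_code T HT) as [cT HcT].
  exists (PComp c [PProj 0; PComp cT [PProj 1]]). simpl. intros p Dp n.
  destruct (Hc (phi p) (Hdom p Dp) n) as [[m Hm] Hcor]. split.
  - destruct (Hex p Dp m) as [m' E]. exists m'. econstructor; [|eauto].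
    repeat econstructor; simpl; try lia.
    rewrite <- E. apply HcT.
  - intros m' k Hk. apply inv_comp in Hk as (ws & Hws & Hf).
    apply inv_cons in Hws as (w1 & ws1 & -> & H1 & Hws).
    apply inv_cons in Hws as (w2 & ws2 & -> & H2 & Hws). apply inv_nil in Hws; subst.
    apply inv_proj in H1; simpl in H1; subst.
    apply inv_comp in H2 as (ws & Hws & H2).
    apply inv_cons in Hws as (w3 & ws3 & -> & H3 & Hws). apply inv_nil in Hws; subst.
    apply inv_proj in H3; simpl in H3; subst.
    apply HcT in H2. subst. destruct (Hsd p Dp m') as [m0 E]. rewrite E in Hf. eapply Hcor; eauto.
Qed.

Lemma computable_plus1 (K : pfun) :
  computable K -> computable (mkPfun (pdom K) (fun p => plus1 (papp K p))).
Proof.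
  intros [c Hc].
  assert (Hg : PR1 (fun z => ifz z 0 (S z))).
  { unfold PR1. apply (PRifz 1 (fun v => v#0) (fun _ => 0) (fun v => S (v#0))); [prp|prp|apply PR_S; prp]. }
  destruct (PR1_code _ Hg) as [cg Hcg].
  exists (PComp cg [c]). simpl. intros p Dp n. destruct (Hc p Dp n) as [[m Hm] Hcor]. split.
  - exists m. econstructor. repeat econstructor; eauto. apply Hcg.
  - intros m' k Hk. apply inv_comp in Hk as (ws & Hws & Hf).
    apply inv_cons in Hws as (w & ws1 & -> & H1 & Hws). apply inv_nil in Hws; subst.
    apply Hcg in Hf. destruct w as [|y]; simpl in Hf. discriminate. injection Hf as ->.
    unfold plus1. f_equal. eapply Hcor; eauto.
Qed.

Section KM.
Variable c : prcode.

Definition Ev (s j u : nat) := enc_opt (evalb s c [j; u]).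
Lemma PR3_Ev : PR3 Ev.
Proof.
  eapply PR_ext. apply (evalb_PR c 2). intros v L. destruct v as [|s [|j [|u [|]]]]; simpl in L; try lia. reflexivity.
Qed.

Fixpoint annA k j w := match k with 0 => 0 | S k' => ifz (annA k' j w) (pred (Ev w j (prew k' w))) (annA k' j w) end.
Lemma PR3_annA : PR3 annA.
Proof.
  apply (PR_rec2 annA (fun _ _ => 0) (fun k a j w => ifz a (pred (Ev w j (prew k w))) a)).
  unfold PR2; prp.
  apply (PRifz 4 (fun v => v#1) (fun v => pred (Ev (v#3) (v#2) (prew (v#0) (v#3)))) (fun v => v#1)). prp.
  apply PRpred. apply PRc3. apply PR3_Ev. prp. prp. apply PRc2. apply PR2_prew. prp. prp. prp.
  auto. auto.
Qed.

Definition ann j w := annA (S w) j w.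
Lemma PR2_ann : PR2 ann.
Proof. unfold PR2, ann. apply (PRc3 2 annA (fun v => S (v#1)) (fun v => v#0) (fun v => v#1)). apply PR3_annA. apply PR_S; prp. prp. prp. Qed.

Fixpoint alv j w := match j with 0 => 1 | S j' => ifz (ann j' w) 0 (alv j' w) end.
Lemma PR2_alv : PR2 alv.
Proof.
  apply (PR_rec1 alv (fun _ => 1) (fun j a w => ifz (ann j w) 0 a)). unfold PR1; prp.
  unfold PR3. apply (PRifz 3 (fun v => ann (v#0) (v#2)) (fun _ => 0) (fun v => v#1)).
  apply PRc2. apply PR2_ann. prp. prp. prp. prp. auto. auto.
Qed.

Fixpoint cnt j w := match j with 0 => 0 | S j' => cnt j' w + ifz (pred (ann j' w)) 0 1 end.
Lemma PR2_cnt : PR2 cnt.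
Proof.
  apply (PR_rec1 cnt (fun _ => 0) (fun j a w => a + ifz (pred (ann j w)) 0 1)). unfold PR1; prp.
  unfold PR3. apply PRadd. prp. apply (PRifz 3 (fun v => pred (ann (v#0) (v#2))) (fun _ => 0) (fun _ => 1)).
  apply PRpred. apply PRc2. apply PR2_ann. prp. prp. prp. prp. auto. auto.
Qed.

Definition term j n w := ifz (alv (S j) w) 0 (ifz (eqn (cnt j w) n) 0 (pred (ann j w))).
Lemma PR3_term : PR3 term.
Proof.
  unfold PR3, term.
  apply (PRifz 3 (fun v => alv (S (v#0)) (v#2)) (fun _ => 0) (fun v => ifz (eqn (cnt (v#0) (v#2)) (v#1)) 0 (pred (ann (v#0) (v#2))))).
  apply PRc2. apply PR2_alv. apply PR_S; prp. prp. prp.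
  apply (PRifz 3 (fun v => eqn (cnt (v#0) (v#2)) (v#1)) (fun _ => 0) (fun v => pred (ann (v#0) (v#2)))).
  apply PRc2. apply PR2_eqn. apply PRc2. apply PR2_cnt. prp. prp. prp. prp.
  apply PRpred. apply PRc2. apply PR2_ann. prp. prp.
Qed.

Fixpoint Ot j n w := match j with 0 => 0 | S j' => ifz (Ot j' n w) (term j' n w) (Ot j' n w) end.
Lemma PR3_Ot : PR3 Ot.
Proof.
  apply (PR_rec2 Ot (fun _ _ => 0) (fun j a n w => ifz a (term j n w) a)). unfold PR2; prp.
  apply (PRifz 4 (fun v => v#1) (fun v => term (v#0) (v#2) (v#3)) (fun v => v#1)). prp.
  apply PRc3. apply PR3_term. prp. prp. prp. prp. auto. auto.
Qed.

Definition outK n w := Ot w n w.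
Lemma PR2_outK : PR2 outK.
Proof. unfold PR2, outK. apply (PRc3 2 Ot (fun v => v#1) (fun v => v#0) (fun v => v#1)). apply PR3_Ot. prp. prp. prp. Qed.

Lemma annA_val k j w y : annA k j w = S y -> exists k', k' < k /\ Ev w j (prew k' w) = S (S y).
Proof.
  induction k; simpl; intros E; [discriminate|]. unfold ifz in E.
  destruct (annA k j w) eqn:A.
  - exists k. split; auto. destruct (Ev w j (prew k w)) as [|[|]]; simpl in E; try discriminate. congruence.
  - destruct (IHk E) as [k' [? ?]]. exists k'. split. lia. congruence.
Qed.

Lemma annA_pos k j w k' : k' < k -> 2 <= Ev w j (prew k' w) -> annA k j w <> 0.
Proof.
  induction k; intros L E; [lia|]. simpl. unfold ifz. destruct (annA k j w) eqn:A.
  - assert (k' = k). { destruct (Nat.eq_dec k' k); auto. exfalso. apply (IHk ltac:(lia)); auto. } subst. lia.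
  - discriminate.
Qed.

Variable K : pfun.
Hypothesis Hc : forall p, pdom K p -> forall n,
    (exists m, peval c [n; enc_word (prefix p m)] (S (papp K p n))) /\
    (forall m k, peval c [n; enc_word (prefix p m)] (S k) -> k = papp K p n).

Variable p : Baire.
Hypothesis Dp : pdom K p.
Variable q' : Baire.
Hypothesis Mq : minus1 (papp K p) q'.

Lemma ann_correct M j y : ann j (enc_word (prefix p M)) = S y -> y = papp K p j.
Proof.
  intros E. apply annA_val in E as [k' [_ E]]. rewrite prew_prefix in E.
  unfold Ev in E. destruct (evalb _ c _) as [z|] eqn:Ez; simpl in E; [|discriminate].
  injection E as ->. apply evalb_sound in Ez. apply (proj2 (Hc p Dp j) _ _ Ez).
Qed.

Lemma alv_spec j w : alv (S j) w <> 0 -> forall j', j' <= j -> ann j' w <> 0.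
Proof.
  induction j; intros A j' L; simpl in A; unfold ifz in A.
  - destruct (ann 0 w) eqn:E; [lia|]. assert (j' = 0) by lia. subst. congruence.
  - destruct (ann (S j) w) eqn:E; [lia|]. destruct (Nat.eq_dec j' (S j)). subst; congruence.
    apply IHj; auto. lia.
Qed.

Lemma alv_pos j w : (forall j', j' <= j -> ann j' w <> 0) -> alv (S j) w = 1.
Proof.
  induction j; intros H; simpl; unfold ifz.
  - destruct (ann 0 w) eqn:E; auto. exfalso; apply (H 0); auto.
  - destruct (ann (S j) w) eqn:E. exfalso; apply (H (S j)); auto.
    simpl in IHj. apply IHj. intros; apply H; lia.
Qed.

Lemma cnt_spec M j : (forall j', j' < j -> ann j' (enc_word (prefix p M)) <> 0) ->
  cnt j (enc_word (prefix p M)) = nz_count (papp K p) j.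
Proof.
  induction j; intros H; simpl; auto. rewrite IHj by (intros; apply H; lia).
  destruct (ann j (enc_word (prefix p M))) as [|y] eqn:E. exfalso; apply (H j); auto.
  apply ann_correct in E. subst. destruct (papp K p j); simpl; auto.
Qed.

Lemma term_correct M j n k : term j n (enc_word (prefix p M)) = S k -> k = q' n.
Proof.
  unfold term, ifz. set (w := enc_word (prefix p M)).
  destruct (alv (S j) w) eqn:A; [discriminate|].
  rewrite eqn_spec. destruct (cnt j w =? n) eqn:C; [|discriminate]. apply Nat.eqb_eq in C.
  intros E. destruct (ann j w) as [|[|y]] eqn:F; simpl in E; try discriminate. injection E as ->.
  unfold w in F. apply ann_correct in F.
  unfold w in C. rewrite cnt_spec in C. 2: { intros; apply (alv_spec j w); [|lia]. rewrite A; discriminate. }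
  pose proof (minus1_at _ _ j Mq) as G. rewrite <- F in G. specialize (G ltac:(lia)). rewrite C in G. congruence.
Qed.

Lemma Ot_some j n w k : Ot j n w = S k -> exists j', term j' n w = S k.
Proof.
  induction j; simpl; intros E; [discriminate|]. unfold ifz in E. destruct (Ot j n w) eqn:O; eauto.
Qed.

Lemma Ot_pos j n w J : term j n w <> 0 -> j < J -> Ot J n w <> 0.
Proof.
  intros T L. induction L; simpl; unfold ifz.
  - destruct (Ot j n w); auto; discriminate.
  - destruct (Ot m n w); auto; discriminate.
Qed.

Lemma bound_exists N : exists B, forall j, j <= N -> exists m s, m <= B /\ s <= B /\
    evalb s c [j; enc_word (prefix p m)] = Some (S (papp K p j)).
Proof.
  induction N.
  - destruct (proj1 (Hc p Dp 0)) as [m Hm]. destruct (evalb_complete _ _ _ Hm) as [s Hs].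
    exists (m + s). intros j L. assert (j = 0) by lia. subst. exists m, s. repeat split; auto; lia.
  - destruct IHN as [B HB]. destruct (proj1 (Hc p Dp (S N))) as [m Hm]. destruct (evalb_complete _ _ _ Hm) as [s Hs].
    exists (B + m + s). intros j L. destruct (Nat.eq_dec j (S N)).
    + subst. exists m, s. repeat split; auto; lia.
    + destruct (HB j ltac:(lia)) as (m' & s' & ? & ? & ?). exists m', s'. repeat split; auto; lia.
Qed.

Lemma outK_exists n : exists M, outK n (enc_word (prefix p M)) = S (q' n).
Proof.
  destruct (Mq n) as [n0 [Q0 N0]].
  destruct (bound_exists n0) as [B HB].
  exists (B + n0 + 1). set (M := B + n0 + 1). set (w := enc_word (prefix p M)).
  assert (Mw : M <= w) by (unfold w; rewrite <- (length_prefix p M) at 1; apply enc_length).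
  assert (Ann : forall j, j <= n0 -> ann j w = S (papp K p j)).
  { intros j L. destruct (HB j L) as (m & s & Lm & Ls & E).
    destruct (ann j w) as [|y] eqn:A.
    - exfalso. revert A. apply (annA_pos _ _ _ (M - m)). lia.
      unfold w. rewrite prew_prefix. replace (M - (M - m)) with m by lia. unfold Ev.
      rewrite (evalb_mono _ _ _ _ E); [simpl; lia| lia].
    - unfold w in A. apply ann_correct in A. congruence. }
  assert (Al : alv (S n0) w = 1) by (apply alv_pos; intros; rewrite Ann; auto).
  assert (Cn : cnt n0 w = n) by (unfold w; rewrite cnt_spec; auto; intros; unfold w in Ann; rewrite Ann; [auto|lia]).
  assert (Tm : term n0 n w = S (q' n)).
  { unfold term. rewrite Al, Cn, eqn_spec, Nat.eqb_refl. simpl. rewrite Ann; auto. }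
  unfold outK. destruct (Ot w n w) as [|k] eqn:O.
  - exfalso. revert O. apply (Ot_pos n0). congruence. lia.
  - apply Ot_some in O as [j' Tj]. unfold w in Tj. apply term_correct in Tj. congruence.
Qed.

Lemma outK_correct n M k : outK n (enc_word (prefix p M)) = S k -> k = q' n.
Proof. unfold outK. intros O. apply Ot_some in O as [j' Tj]. eapply term_correct; eauto. Qed.

End KM.

Lemma computable_minus1 (K : pfun) (D : Baire -> Prop) (phi : Baire -> Baire) :
  computable K -> (forall p, D p -> pdom K p /\ minus1 (papp K p) (phi p)) ->
  computable (mkPfun D phi).
Proof.
  intros [c Hc] HD. destruct (PR2_outK c) as [co Hco].
  exists co. simpl. intros p Dp n. destruct (HD p Dp) as [DK Mq]. split.
  - destruct (outK_exists c K Hc p DK (phi p) Mq n) as [M HM]. exists M. rewrite <- HM. apply (Hco [n; _]). auto.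
  - intros m k Hk. assert (E : S k = outK c n (enc_word (prefix p m))).
    { eapply peval_det; [exact Hk|]. apply (Hco [n; _]). auto. }
    symmetry in E. eapply outK_correct; eauto.
Qed.

Definition m1f (r : Baire) : Baire :=
  match excluded_middle_informative (exists q, minus1 r q) with
  | left H => proj1_sig (constructive_indefinite_description _ H)
  | right _ => r end.

Lemma m1f_spec r q : minus1 r q -> m1f r = q.
Proof.
  intros M. unfold m1f. destruct excluded_middle_informative as [H|H]; [|exfalso; eauto].
  destruct constructive_indefinite_description as [q0 M0]. simpl.
  apply functional_extensionality. apply minus1_unique with r; auto.
Qed.

Definition upd (G : pfun) (q r : Baire) : pfun :=
  mkPfun (fun s => s = q \/ pdom G s)
         (fun s => if excluded_middle_informative (s = q) then r else papp G s).

Lemma upd_realizes {U V} (dU : Baire -> U -> Prop) (dV : Baire -> V -> Prop) R G q r :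
  realizes dU dV G R ->
  (forall u, dU q u -> pdomain R u -> exists v, dV r v /\ R u v) ->
  realizes dU dV (upd G q r) R.
Proof.
  intros HG Hq s u Hs Hu. simpl. destruct excluded_middle_informative as [E|E].
  - subst. split; auto.
  - destruct (HG s u Hs Hu) as [A B]. split; auto.
Qed.

Lemma no_free {X Y U V} (dX : Baire -> X -> Prop) (dY : Baire -> Y -> Prop) f
  (dU : Baire -> U -> Prop) (dV : Baire -> V -> Prop) R H K G0 p x :
  rep_functional dY -> rep_surjective dX -> diverse f ->
  (forall G, realizes dU dV G R -> realizes dX dY (compose3 H G K) f) ->
  realizes dU dV G0 R -> dX p x -> pdomain f x ->
  (forall G r, realizes dU dV G R -> (exists v, dV r v) -> realizes dU dV (upd G (papp K p) r) R) ->
  False.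
Proof.
  intros FY SX Dv Red HG0 Hp Hx P1.
  destruct (Dv x Hx) as [y [Hy Disj]]. destruct (SX y) as [p' Hp'].
  set (q := papp K p). set (q' := papp K p').
  assert (Clash : forall G1 G2, realizes dU dV G1 R -> realizes dU dV G2 R ->
            papp G1 (papp K p) = papp G2 (papp K p') -> False).
  { intros G1 G2 R1 R2 E.
    destruct (Red G1 R1 p x Hp Hx) as [_ [z [Hz fz]]].
    destruct (Red G2 R2 p' y Hp' Hy) as [_ [z' [Hz' fz']]].
    simpl in Hz, Hz'. rewrite E in Hz. assert (z = z') by (eapply FY; eauto). subst.
    apply (Disj z'); auto. }
  destruct (classic (q' = q)) as [Eq|Nq].
  - apply (Clash G0 G0 HG0 HG0). fold q q'. rewrite Eq. auto.
  - destruct (classic (exists u, dU q' u /\ pdomain R u)) as [[u [Hu Du]]|ND].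
    + destruct (HG0 q' u Hu Du) as [_ [v [Hv _]]].
      apply (Clash (upd G0 q (papp G0 q')) G0).
      * apply P1; eauto.
      * auto.
      * simpl. destruct excluded_middle_informative as [E|E]; [auto|]. exfalso; apply E; auto.
    + apply (Clash G0 (upd G0 q' (papp G0 q)) HG0).
      * apply upd_realizes; auto. intros u Hu Du. exfalso; eauto.
      * simpl. destruct excluded_middle_informative as [E|E]; [auto|]. exfalso; apply E; auto.
Qed.

Lemma bar_total {X} (d : Baire -> X -> Prop) p : exists x, bar_delta d p x.
Proof.
  destruct (classic (exists q x', minus1 p q /\ d q x')) as [[q [x' [M Hd]]]|N].
  - exists (Some x'). simpl. eauto.
  - exists None. simpl. auto.
Qed.

Definition Abar {U V} (dU : Baire -> U -> Prop) (g : U -> V -> Prop) (q : Baire) :=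
  exists q' u, minus1 q q' /\ dU q' u /\ pdomain g u.

Lemma bar_named_some {U V} (dU : Baire -> U -> Prop) (g : U -> V -> Prop) q ub :
  rep_functional dU -> bar_delta dU q ub -> forall q' u, minus1 q q' -> dU q' u -> ub = Some u.
Proof.
  intros F B q' u M Hu. destruct ub as [u'|]; simpl in B.
  - destruct B as [q'' [M' Hu']]. assert (q'' = q') by (apply functional_extensionality; apply minus1_unique with q; auto).
    subst. f_equal. eapply F; eauto.
  - exfalso; apply B; eauto.
Qed.

Lemma completion_forward {X Y U V} (dX : Baire -> X -> Prop) (dY : Baire -> Y -> Prop) (f : X -> Y -> Prop)
  (dU : Baire -> U -> Prop) (dV : Baire -> V -> Prop) (g : U -> V -> Prop) :
  is_rep dX -> is_rep dY -> diverse f -> is_rep dU ->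
  sW_le dX dY f (bar_delta dU) (bar_delta dV) (completion g) -> sW_le dX dY f dU dV g.
Proof.
  intros [FX SX] [FY SY] Dv [FU SU] [H [K [cH [cK Red]]]].
  exists (mkPfun (fun r => pdom H (plus1 r)) (fun r => papp H (plus1 r))).
  exists (mkPfun (fun p => pdom K p /\ exists q', minus1 (papp K p) q') (fun p => m1f (papp K p))).
  split; [|split].
  - apply (computable_pre H T2 plus1); auto using PR1_T2.
    + intros p _ m. exists m. rewrite T2_spec, prefix_plus1. auto.
    + intros p _ m. exists m. rewrite T2_spec, prefix_plus1. auto.
  - apply computable_minus1 with K; auto.
    intros p [D [q' M]]. split; auto. rewrite (m1f_spec _ q'); auto.
  - intros G HG.
    set (G' := mkPfun (fun q => pdom G (m1f q) \/ ~ Abar dU g q) (fun q => plus1 (papp G (m1f q)))).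
    assert (HG' : realizes (bar_delta dU) (bar_delta dV) G' (completion g)).
    { intros q ub Hq Dub. simpl. destruct (classic (Abar dU g q)) as [[q' [u [M [Hu Du]]]]|NA].
      - pose proof (bar_named_some dU g q ub FU Hq q' u M Hu) as ->.
        rewrite (m1f_spec q q' M). destruct (HG q' u Hu Du) as [Dg [v [Hv guv]]].
        split; auto. exists (Some v). split. simpl. exists (papp G q'). split; auto. apply minus1_plus1.
        simpl. intros _. eauto.
      - split; auto. destruct (bar_total dV (plus1 (papp G (m1f q)))) as [vb Hvb]. exists vb. split; auto.
        destruct ub as [u|]; simpl; auto. intros Du. exfalso. apply NA.
        simpl in Hq. destruct Hq as [q' [M Hu]]. exists q', u. auto. }
    intros p x Hp Hx.
    assert (A : Abar dU g (papp K p)).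
    { apply NNPP. intros NA. apply (no_free dX dY f (bar_delta dU) (bar_delta dV) (completion g) H K G' p x); auto.
      intros G1 r HG1 _. apply upd_realizes; auto. intros ub Hub Dub.
      destruct (bar_total dV r) as [vb Hvb]. exists vb. split; auto.
      destruct ub as [u|]; simpl; auto. intros Du. exfalso. apply NA.
      simpl in Hub. destruct Hub as [q' [M Hu]]. exists q', u. auto. }
    destruct A as [q' [u [M [Hu Du]]]].
    destruct (Red G' HG' p x Hp Hx) as [[DK [DG' DH]] [z [Hz fz]]].
    simpl in *. rewrite (m1f_spec _ q' M) in *.
    destruct (HG q' u Hu Du) as [Dg _].
    split. split. split; eauto. split; auto. eauto.
Qed.

Lemma completion_backward {X Y U V} (dX : Baire -> X -> Prop) (dY : Baire -> Y -> Prop) (f : X -> Y -> Prop)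
  (dU : Baire -> U -> Prop) (dV : Baire -> V -> Prop) (g : U -> V -> Prop) :
  sW_le dX dY f dU dV g -> sW_le dX dY f (bar_delta dU) (bar_delta dV) (completion g).
Proof.
  intros [H [K [cH [cK Red]]]].
  exists (mkPfun (fun r => exists r', minus1 r r' /\ pdom H r') (fun r => papp H (m1f r))).
  exists (mkPfun (pdom K) (fun p => plus1 (papp K p))).
  split; [|split].
  - apply (computable_pre H T1 m1f); auto using PR1_T1.
    + intros p [r' [M D]]. rewrite (m1f_spec _ r' M). auto.
    + intros p [r' [M D]] m. rewrite (m1f_spec _ r' M). destruct (M m) as [n0 [_ N0]].
      exists n0. rewrite T1_spec, (m1l_prefix _ r'); auto. congruence.
    + intros p [r' [M D]] m. rewrite (m1f_spec _ r' M). exists (nz_count p m).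
      rewrite T1_spec, (m1l_prefix _ r'); auto.
  - apply computable_plus1; auto.
  - intros G HG.
    set (G0 := mkPfun (fun r => pdom G (plus1 r) /\ exists r', minus1 (papp G (plus1 r)) r')
                      (fun r => m1f (papp G (plus1 r)))).
    assert (HG0 : realizes dU dV G0 g).
    { intros r u Hr Du. simpl.
      assert (Hb : bar_delta dU (plus1 r) (Some u)) by (simpl; exists r; split; auto; apply minus1_plus1).
      assert (Dc : pdomain (completion g) (Some u)).
      { destruct Du as [v0 gv0]. exists (Some v0). simpl. intros _. eauto. }
      destruct (HG (plus1 r) (Some u) Hb Dc) as [DG [vb [Hvb C]]].
      simpl in C. destruct (C Du) as [v [-> guv]].
      simpl in Hvb. destruct Hvb as [r' [M Hv]].
      split. split; eauto. exists v. rewrite (m1f_spec _ r' M). auto. }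
    intros p x Hp Hx. destruct (Red G0 HG0 p x Hp Hx) as [[DK [[DG [r' M]] DH]] [z [Hz fz]]].
    simpl in *. rewrite (m1f_spec _ r' M) in DH, Hz. rewrite (m1f_spec _ r' M).
    split. split; auto. split; eauto. eauto.
Qed.

Definition Atot {U V} (dU : Baire -> U -> Prop) (g : U -> V -> Prop) (q : Baire) :=
  exists u, dU q u /\ pdomain g u.

Definition dflt {V} (dV : Baire -> V -> Prop) : Baire :=
  match excluded_middle_informative (exists r v, dV r v) with
  | left H => proj1_sig (constructive_indefinite_description _ H)
  | right _ => fun _ => 0 end.

Lemma dflt_spec {V} (dV : Baire -> V -> Prop) r v : dV r v -> exists v', dV (dflt dV) v'.
Proof.
  intros Hv. unfold dflt. destruct excluded_middle_informative as [E|E]; [|exfalso; eauto].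
  destruct constructive_indefinite_description as [r0 H0]. simpl. auto.
Qed.

Lemma total_forward {X Y U V} (dX : Baire -> X -> Prop) (dY : Baire -> Y -> Prop) (f : X -> Y -> Prop)
  (dU : Baire -> U -> Prop) (dV : Baire -> V -> Prop) (g : U -> V -> Prop) :
  is_rep dX -> is_rep dY -> diverse f -> is_rep dU -> is_rep dV ->
  sW_le dX dY f dU dV (totalization g) -> sW_le dX dY f dU dV g.
Proof.
  intros [FX SX] [FY SY] Dv [FU SU] [FV SV] [H [K [cH [cK Red]]]].
  exists H, K. split; [|split]; auto.
  intros G HG.
  set (G' := mkPfun (fun q => pdom G q \/ ~ Atot dU g q)
             (fun q => if excluded_middle_informative (Atot dU g q) then papp G q else dflt dV)).
  assert (HG' : realizes dU dV G' (totalization g)).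
  { intros q u Hq Du. simpl. destruct excluded_middle_informative as [A|NA].
    - destruct A as [u' [Hu' Du']]. destruct (HG q u' Hu' Du') as [Dg [v [Hv guv]]].
      split; auto. exists v. split; auto. intros _.
      assert (u = u') by (eapply FU; eauto). subst; auto.
    - split; auto. destruct Du as [v0 Tv0]. destruct (SV v0) as [r0 Hr0].
      destruct (dflt_spec dV r0 v0 Hr0) as [v Hv]. exists v. split; auto.
      intros Dg. exfalso. apply NA. exists u. auto. }
  intros p x Hp Hx.
  assert (A : Atot dU g (papp K p)).
  { apply NNPP. intros NA. apply (no_free dX dY f dU dV (totalization g) H K G' p x); auto.
    intros G1 r HG1 [v Hv]. apply upd_realizes; auto. intros u Hu Du. exists v. split; auto.
    intros Dg. exfalso. apply NA. exists u. auto. }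
  destruct (Red G' HG' p x Hp Hx) as [[DK [DG' DH]] [z [Hz fz]]].
  simpl in *. destruct excluded_middle_informative as [_|NA]; [|contradiction].
  destruct A as [u [Hu Du]]. destruct (HG _ u Hu Du) as [Dg _].
  split. split; auto. eauto.
Qed.

Lemma total_backward {X Y U V} (dX : Baire -> X -> Prop) (dY : Baire -> Y -> Prop) (f : X -> Y -> Prop)
  (dU : Baire -> U -> Prop) (dV : Baire -> V -> Prop) (g : U -> V -> Prop) :
  sW_le dX dY f dU dV g -> sW_le dX dY f dU dV (totalization g).
Proof.
  intros [H [K [cH [cK Red]]]]. exists H, K. split; [|split]; auto.
  intros G HG. apply Red. intros q u Hq Du.
  assert (Dt : pdomain (totalization g) u) by (destruct Du as [v gv]; exists v; intros _; auto).
  destruct (HG q u Hq Dt) as [D [v [Hv Tv]]]. split; auto. exists v. split; auto.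
Qed.

Theorem proposition4p13 :
  forall (X Y : Type) (dX : Baire -> X -> Prop) (dY : Baire -> Y -> Prop)
         (f : X -> Y -> Prop),
    is_rep dX -> is_rep dY -> diverse f ->
    (forall (U V : Type) (dU : Baire -> U -> Prop) (dV : Baire -> V -> Prop)
            (g : U -> V -> Prop),
        is_rep dU -> is_rep dV ->
        (sW_le dX dY f (bar_delta dU) (bar_delta dV) (completion g)
         <-> sW_le dX dY f dU dV g)) /\
    (rep_total dY ->
     forall (U V : Type) (dU : Baire -> U -> Prop) (dV : Baire -> V -> Prop)
            (g : U -> V -> Prop),
        is_rep dU -> is_rep dV ->
        (sW_le dX dY f dU dV (totalization g) <-> sW_le dX dY f dU dV g)).
Proof.
  intros X Y dX dY f RX RY Dv. split.
  - intros U V dU dV g RU RV. split.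
    + apply completion_forward; auto.
    + apply completion_backward.
  - intros _ U V dU dV g RU RV. split.
    + apply total_forward; auto.
    + apply total_backward.
Qed.
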